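(* Let $\mathscr{H}$ be a complex Hilbert space and let $B,C$ be Hilbert–Schmidt operators on $\mathscr{H}$. Then $$w_{(2,e)}^2(B,C)\geq\frac18\,|\mathrm{tr}((B+C)^2)+\mathrm{tr}((B-C)^2)+2\,\mathrm{tr}((B+C)(B-C))|+\frac18\left(\|B+C\|_2^2+\|B-C\|_2^2\right)+\frac14\,\mathrm{Re}\big(\mathrm{tr}((B+C)(B-C)^* )\big),$$ where $\mathrm{Re}(z)$ denotes the real part of $z\in\mathbb{C}$.
   Context: An operator $T$ on $\mathscr{H}$ is Hilbert–Schmidt if $\sum_i\|Te_i\|^2<\infty$ for some (equivalently every) orthonormal basis $\{e_i\}$; its Hilbert–Schmidt norm is $\|T\|_2=(\mathrm{tr}(T^*T))^{1/2}$. For an operator $T$, $\Re(T)=\frac12(T+T^* )$. The Hilbert–Schmidt Euclidean operator radius is $w_{(2,e)}(B,C)=\sup_{\lambda_1,\lambda_2\in\mathbb{C},\ |\lambda_1|^2+|\lambda_2|^2\leq1}\sup_{\theta\in\mathbb{R}}\|\Re(e^{i\theta}(\lambda_1B+\lambda_2C))\|_2$. *)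

(* Defs.v *)
From HB Require Import structures.
From mathcomp Require Import all_boot all_order all_algebra.
From mathcomp Require Import all_classical all_reals all_analysis.
From mathcomp.real_closed Require Import complex.
From mathcomp Require Import finmap.
Import Order.TTheory GRing.Theory Num.Theory.

Set Implicit Arguments.
Unset Strict Implicit.
Unset Printing Implicit Defensive.

Local Open Scope classical_set_scope.
Local Open Scope ring_scope.
Local Open Scope complex_scope.

Section Hilbert.
Variables (R : realType) (H : lmodType R[i]) (ip : H -> H -> R[i]).

Definition hnorm (x : H) : R := Num.sqrt (complex.Re (ip x x)).

Record is_hilbert : Prop := {
  ip_linl : forall (a : R[i]) (x y z : H), ip (a *: x + y) z = a * ip x z + ip y z;
  ip_conj : forall x y : H, ip y x = (ip x y)^*;
  ip_ge0 : forall x : H, 0 <= ip x x;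
  ip_def : forall x : H, ip x x = 0 -> x = 0;
  ip_complete : forall u : nat -> H,
    (forall e : R, 0 < e -> exists N : nat, forall m n : nat,
        (N <= m)%N -> (N <= n)%N -> hnorm (u m - u n) < e) ->
    exists l : H, forall e : R, 0 < e -> exists N : nat, forall n : nat,
        (N <= n)%N -> hnorm (u n - l) < e }.

Definition bounded_linear (T : H -> H) : Prop :=
  (forall (a : R[i]) (x y : H), T (a *: x + y) = a *: T x + T y) /\
  exists M : R, forall x : H, hnorm (T x) <= M * hnorm x.

Definition orthonormal_basis (E : set H) : Prop :=
  (forall e, E e -> ip e e = 1) /\
  (forall e f, E e -> E f -> e <> f -> ip e f = 0) /\
  (forall x, (forall e, E e -> ip x e = 0) -> x = 0).

Definition hilbert_schmidt (T : H -> H) : Prop :=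
  bounded_linear T /\
  exists E : set H, orthonormal_basis E /\
    (\esum_(e in E) ((hnorm (T e)) ^+ 2)%:E < +oo)%E.

Definition adj (T : H -> H) : H -> H :=
  fun x => xget 0 [set y | forall z : H, ip (T z) x = ip z y].

(* unordered summation over E (limit of the net of finite partial sums) *)
Definition has_sum (E : set H) (f : H -> R[i]) (s : R[i]) : Prop :=
  forall eps : R, 0 < eps -> exists F0 : {fset H}, [set` F0] `<=` E /\
    forall F : {fset H}, [set` F] `<=` E -> (F0 `<=` F)%fset ->
      `| \sum_(e <- F) f e - s | < eps%:C.

Definition trace (E : set H) (T : H -> H) : R[i] :=
  xget 0 [set s | has_sum E (fun e => ip (T e) e) s].

Definition hs_norm (E : set H) (T : H -> H) : R :=
  Num.sqrt (complex.Re (trace E (adj T \o T))).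

Definition ReOp (T : H -> H) : H -> H := fun x => 2^-1 *: (T x + adj T x).

Definition expi (t : R) : R[i] := (cos t) +i* (sin t).

Definition w2e (E : set H) (B C : H -> H) : R :=
  sup [set r : R | exists (l1 l2 : R[i]) (t : R),
         `|l1| ^+ 2 + `|l2| ^+ 2 <= 1 /\
         r = hs_norm E (ReOp (fun x => expi t *: (l1 *: B x + l2 *: C x)))].

End Hilbert.

(* Main.v *)
Require Import Defs.
From HB Require Import structures.
From mathcomp Require Import all_boot all_order all_algebra.
From mathcomp Require Import all_classical all_reals all_analysis.
From mathcomp.real_closed Require Import complex.
From mathcomp Require Import finmap.
From mathcomp Require Import ring lra.
Import Order.TTheory GRing.Theory Num.Theory.
Local Open Scope classical_set_scope.
Local Open Scope ring_scope.
Local Open Scope complex_scope.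
Set Implicit Arguments.
Unset Strict Implicit.
Unset Printing Implicit Defensive.
Section Basics.
Variables (R : realType) (H : lmodType R[i]) (ip : H -> H -> R[i]).
Hypothesis hH : is_hilbert ip.

Lemma ReD (x y : R[i]) : complex.Re (x + y) = complex.Re x + complex.Re y.
Proof. by case: x; case: y. Qed.
Lemma ImD (x y : R[i]) : complex.Im (x + y) = complex.Im x + complex.Im y.
Proof. by case: x; case: y. Qed.
Lemma ReN (x : R[i]) : complex.Re (- x) = - complex.Re x.
Proof. by case: x. Qed.
Lemma ImN (x : R[i]) : complex.Im (- x) = - complex.Im x.
Proof. by case: x. Qed.
Lemma ReB (x y : R[i]) : complex.Re (x - y) = complex.Re x - complex.Re y.
Proof. by rewrite ReD ReN. Qed.
Lemma ReC (r : R) : complex.Re r%:C = r. Proof. by []. Qed.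
Lemma ImC (r : R) : complex.Im r%:C = 0. Proof. by []. Qed.
Lemma ReJ (x : R[i]) : complex.Re (conjc x) = complex.Re x. Proof. by case: x. Qed.
Lemma ReCM (r : R) (x : R[i]) : complex.Re (r%:C * x) = r * complex.Re x.
Proof. by case: x => a b /=; rewrite mul0r subr0. Qed.
Lemma ImCM (r : R) (x : R[i]) : complex.Im (r%:C * x) = r * complex.Im x.
Proof. by case: x => a b /=; rewrite mul0r addr0. Qed.
Lemma Re_sum (I : Type) (s : seq I) (f : I -> R[i]) :
  complex.Re (\sum_(i <- s) f i) = \sum_(i <- s) complex.Re (f i).
Proof. elim: s => [|a s IH]; first by rewrite !big_nil. by rewrite !big_cons ReD IH. Qed.
Lemma Im_sum (I : Type) (s : seq I) (f : I -> R[i]) :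
  complex.Im (\sum_(i <- s) f i) = \sum_(i <- s) complex.Im (f i).
Proof. elim: s => [|a s IH]; first by rewrite !big_nil. by rewrite !big_cons ImD IH. Qed.
Lemma C_sum (I : Type) (s : seq I) (f : I -> R) :
  (\sum_(i <- s) f i)%:C = \sum_(i <- s) (f i)%:C.
Proof. exact: rmorph_sum. Qed.

Lemma JD (x y : R[i]) : conjc (x + y) = conjc x + conjc y.
Proof. by case: x; case: y => *; rewrite /= opprD. Qed.
Lemma JN (x : R[i]) : conjc (- x) = - conjc x.
Proof. by case: x. Qed.
Lemma JM (x y : R[i]) : conjc (x * y) = conjc x * conjc y.
Proof. by case: x; case: y => a b c d; apply/eqP; rewrite eq_complex /= !mulrN !mulNr opprK opprD !eqxx. Qed.
Lemma J0 : conjc (0 : R[i]) = 0.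
Proof. by rewrite /= oppr0. Qed.
Lemma JK (x : R[i]) : conjc (conjc x) = x.
Proof. by case: x => a b /=; rewrite opprK. Qed.
Lemma JC (r : R) : conjc r%:C = r%:C.
Proof. by rewrite /= oppr0. Qed.

Definition abs2 (z : R[i]) : R := complex.Re (z * conjc z).
Lemma abs2E z : abs2 z = complex.Re z ^+ 2 + complex.Im z ^+ 2.
Proof. by case: z => a b; rewrite /abs2 /= mulrN opprK !expr2. Qed.
Lemma mulJ z : z * conjc z = (abs2 z)%:C.
Proof. by case: z => a b; rewrite /abs2 /=; apply/eqP; rewrite eq_complex /= !eqxx /= mulrN mulrC addNr. Qed.
Lemma abs2_ge0 z : 0 <= abs2 z.
Proof. by rewrite abs2E addr_ge0 // sqr_ge0. Qed.
Lemma abs2M z w : abs2 (z * w) = abs2 z * abs2 w.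
Proof.
by case: z => a b; case: w => c d; rewrite !abs2E /=; ring.
Qed.
Lemma abs2J z : abs2 (conjc z) = abs2 z.
Proof. by case: z => a b; rewrite !abs2E /= sqrrN. Qed.
Lemma abs2_eq0 z : abs2 z = 0 -> z = 0.
Proof.
rewrite abs2E => /eqP; rewrite paddr_eq0 ?sqr_ge0 // !sqrf_eq0 => /andP[/eqP a /eqP b].
by case: z a b => a b /= -> ->.
Qed.

Lemma ipDl x y z : ip (x + y) z = ip x z + ip y z.
Proof. by have := ip_linl hH 1 x y z; rewrite scale1r mul1r. Qed.
Lemma ip0l z : ip 0 z = 0.
Proof. by apply/(addrI (ip 0 z)); rewrite -ipDl !addr0. Qed.
Lemma ipZl a x z : ip (a *: x) z = a * ip x z.
Proof. by have := ip_linl hH a x 0 z; rewrite addr0 ip0l addr0. Qed.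
Lemma ipNl x z : ip (- x) z = - ip x z.
Proof. by rewrite -scaleN1r ipZl mulN1r. Qed.
Lemma ipBl x y z : ip (x - y) z = ip x z - ip y z.
Proof. by rewrite ipDl ipNl. Qed.
Lemma ipC x y : ip x y = conjc (ip y x).
Proof. exact: ip_conj hH y x. Qed.
Lemma ipDr x y z : ip x (y + z) = ip x y + ip x z.
Proof. by rewrite ipC ipDl JD -!ipC. Qed.
Lemma ipZr a x y : ip x (a *: y) = conjc a * ip x y.
Proof. by rewrite ipC ipZl JM -!ipC. Qed.
Lemma ip0r z : ip z 0 = 0.
Proof. by rewrite ipC ip0l J0. Qed.
Lemma ipNr x z : ip z (- x) = - ip z x.
Proof. by rewrite ipC ipNl JN -ipC. Qed.
Lemma ipBr x y z : ip z (x - y) = ip z x - ip z y.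
Proof. by rewrite ipDr ipNr. Qed.
Lemma ip_suml (I : Type) (s : seq I) (f : I -> H) z :
  ip (\sum_(i <- s) f i) z = \sum_(i <- s) ip (f i) z.
Proof. elim: s => [|a s IH]; first by rewrite !big_nil ip0l. by rewrite !big_cons ipDl IH. Qed.
Lemma ip_sumr (I : Type) (s : seq I) (f : I -> H) z :
  ip z (\sum_(i <- s) f i) = \sum_(i <- s) ip z (f i).
Proof. elim: s => [|a s IH]; first by rewrite !big_nil ip0r. by rewrite !big_cons ipDr IH. Qed.

Definition n2 (x : H) : R := complex.Re (ip x x).
Lemma ipxx x : ip x x = (n2 x)%:C.
Proof.
have := ip_ge0 hH x; rewrite /n2; case: (ip x x) => a b.
by rewrite lecE /= => /andP[/eqP -> _].
Qed.
Lemma n2_ge0 x : 0 <= n2 x.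
Proof. by have := ip_ge0 hH x; rewrite ipxx lecR. Qed.
Lemma n2_eq0 x : n2 x = 0 -> x = 0.
Proof. by move=> h; apply: (ip_def hH); rewrite ipxx h. Qed.
Lemma n20 : n2 0 = 0.
Proof. by rewrite /n2 ip0l. Qed.
Lemma hnorm2 x : hnorm ip x ^+ 2 = n2 x.
Proof. by rewrite /hnorm sqr_sqrtr // n2_ge0. Qed.
Lemma n2Z a x : n2 (a *: x) = abs2 a * n2 x.
Proof. by rewrite /n2 ipZl ipZr mulrA mulJ ipxx -rmorphM. Qed.
Lemma ReipC x y : complex.Re (ip y x) = complex.Re (ip x y).
Proof. by rewrite ipC ReJ. Qed.
Lemma n2D x y : n2 (x + y) = n2 x + n2 y + 2 * complex.Re (ip x y).
Proof.
rewrite /n2 ipDl !ipDr !ReD ReipC; rewrite -!/(n2 _). by rewrite mulr2n mulrDl mul1r; lra.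
Qed.
Lemma n2N x : n2 (- x) = n2 x.
Proof. by rewrite /n2 ipNl ipNr opprK. Qed.
Lemma n2B x y : n2 (x - y) = n2 x + n2 y - 2 * complex.Re (ip x y).
Proof. by rewrite n2D n2N ipNr ReN mulrN. Qed.
Lemma n2D_le x y : n2 (x + y) <= 2 * n2 x + 2 * n2 y.
Proof.
have := n2_ge0 (x - y); rewrite n2B n2D => h; lra.
Qed.

End Basics.

Section B.
Variables (R : realType) (H : lmodType R[i]) (ip : H -> H -> R[i]).
Hypothesis hH : is_hilbert ip.

Lemma RCD (a b : R) : (a + b)%:C = a%:C + b%:C :> R[i].
Proof. by apply/eqP; rewrite eq_complex /= addr0 !eqxx. Qed.
Lemma RCN (a : R) : (- a)%:C = - a%:C :> R[i].
Proof. by apply/eqP; rewrite eq_complex /= oppr0 !eqxx. Qed.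
Lemma RCB (a b : R) : (a - b)%:C = a%:C - b%:C :> R[i].
Proof. by rewrite RCD RCN. Qed.
Lemma RCM (a b : R) : (a * b)%:C = a%:C * b%:C :> R[i].
Proof. by apply/eqP; rewrite eq_complex /= !mul0r mulr0 subr0 addr0 !eqxx. Qed.

Definition nc (z : R[i]) : R := Num.sqrt (abs2 z).
Lemma normcE' (z : R[i]) : `|z| = (nc z)%:C.
Proof. by rewrite normc_def /nc abs2E. Qed.
Lemma nc_ge0 z : 0 <= nc z. Proof. exact: sqrtr_ge0. Qed.
Lemma nc2 z : nc z ^+ 2 = abs2 z. Proof. by rewrite sqr_sqrtr // abs2_ge0. Qed.
Lemma nc_eq0 z : nc z = 0 -> z = 0.
Proof. by move=> h; apply: abs2_eq0; rewrite -nc2 h expr0n. Qed.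
Lemma ncD z w : nc (z + w) <= nc z + nc w.
Proof. by have := ler_normD z w; rewrite !normcE' -RCD lecR. Qed.
Lemma ncM z w : nc (z * w) = nc z * nc w.
Proof. by rewrite /nc abs2M sqrtrM // abs2_ge0. Qed.
Lemma ncN z : nc (- z) = nc z.
Proof. by rewrite /nc !abs2E ReN ImN !sqrrN. Qed.
Lemma ncJ z : nc (conjc z) = nc z.
Proof. by rewrite /nc abs2J. Qed.
Lemma ncC (r : R) : nc r%:C = `|r|.
Proof. by rewrite /nc abs2E ReC ImC expr0n addr0 sqrtr_sqr. Qed.
Lemma ncB z w : nc (z - w) <= nc z + nc w.
Proof. by rewrite -(ncN w) ncD. Qed.
Lemma nc_lt z (eps : R) : (`|z| < eps%:C) = (nc z < eps).
Proof. by rewrite normcE' ltcR. Qed.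
Lemma Re_le_nc z : `|complex.Re z| <= nc z.
Proof.
rewrite /nc -sqrtr_sqr ler_wsqrtr // abs2E lerDl sqr_ge0 //.
Qed.
Lemma Im_le_nc z : `|complex.Im z| <= nc z.
Proof.
rewrite /nc -sqrtr_sqr ler_wsqrtr // abs2E lerDr sqr_ge0 //.
Qed.

Lemma CS x y : abs2 (ip x y) <= n2 ip x * n2 ip y.
Proof.
have [y0|ny] := eqVneq (n2 ip y) 0.
  by rewrite (n2_eq0 hH y0) (ip0r hH) (n20 hH) mulr0 /abs2 mul0r /=.
have cpos : 0 < n2 ip y by rewrite lt_def ny n2_ge0.
set u := ip x y; set c := n2 ip y.
pose t := u * (c^-1)%:C.
have := n2_ge0 hH (x - t *: y).
rewrite (n2B hH) (n2Z hH) (ipZr hH) -/u -/c.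
have -> : conjc t * u = (c^-1 * abs2 u)%:C.
  by rewrite /t JM JC mulrC mulrA mulJ -RCM mulrC.
rewrite [complex.Re _]/= /t abs2M [abs2 (_%:C)]abs2E [complex.Re _]/= [complex.Im _]/= expr0n addr0 => h.
have h2 : abs2 u / c <= n2 ip x.
  have e : abs2 u * c^-1 ^+ 2 * c = abs2 u / c.
    by rewrite expr2 -mulrA -mulrA mulVf ?mulr1 // gt_eqF.
  move: h; rewrite e mulrC; lra.
by rewrite -ler_pdivrMr.
Qed.

End B.

Section C.
Variables (R : realType) (H : lmodType R[i]) (ip : H -> H -> R[i]).
Hypothesis hH : is_hilbert ip.
Variable E : set H.

Lemma small_eq0 (z : R[i]) : (forall eps : R, 0 < eps -> nc z <= eps) -> z = 0.
Proof.
move=> h; apply: nc_eq0; apply/eqP; rewrite eq_le nc_ge0 andbT.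
apply/ler_addgt0Pr => e e0; rewrite add0r; exact: h.
Qed.

Lemma fsetU_sub (F1 F2 : {fset H}) : [set` F1] `<=` E -> [set` F2] `<=` E ->
  [set` (F1 `|` F2)%fset] `<=` E.
Proof. by move=> h1 h2 x /=; rewrite in_fsetU => /orP[/h1|/h2]. Qed.

Lemma hsP f s : has_sum E f s <-> forall eps : R, 0 < eps -> exists F0 : {fset H},
  [set` F0] `<=` E /\ forall F : {fset H}, [set` F] `<=` E -> (F0 `<=` F)%fset ->
  nc (\sum_(e <- F) f e - s) < eps.
Proof.
split=> h eps /h [F0 [h1 h2]]; exists F0; split=> // F hF hF0.
  by rewrite -nc_lt; apply: h2.
by rewrite nc_lt; apply: h2.
Qed.

Lemma has_sum_unique f s1 s2 : has_sum E f s1 -> has_sum E f s2 -> s1 = s2.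
Proof.
move=> /hsP h1 /hsP h2; apply/eqP; rewrite -subr_eq0; apply/eqP/small_eq0 => eps e0.
have e2 : 0 < eps / 2 by rewrite divr_gt0.
have [F1 [s1E k1]] := h1 _ e2; have [F2 [s2E k2]] := h2 _ e2.
have hU := fsetU_sub s1E s2E.
have a1 := k1 _ hU (fsubsetUl _ _); have a2 := k2 _ hU (fsubsetUr _ _).
have -> : s1 - s2 = (\sum_(e <- (F1 `|` F2)%fset) f e - s2) - (\sum_(e <- (F1 `|` F2)%fset) f e - s1).
  by ring.
apply: le_trans (ncB _ _) _; lra.
Qed.

Lemma has_sum_add f g s t : has_sum E f s -> has_sum E g t ->
  has_sum E (fun e => f e + g e) (s + t).
Proof.
move=> /hsP h1 /hsP h2; apply/hsP => eps e0.
have e2 : 0 < eps / 2 by rewrite divr_gt0.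
have [F1 [s1E k1]] := h1 _ e2; have [F2 [s2E k2]] := h2 _ e2.
exists (F1 `|` F2)%fset; split; first exact: fsetU_sub.
move=> F hF hsub.
have a1 := k1 _ hF (fsubset_trans (fsubsetUl _ _) hsub).
have a2 := k2 _ hF (fsubset_trans (fsubsetUr _ _) hsub).
rewrite big_split /=.
have -> : \sum_(i <- F) f i + \sum_(i <- F) g i - (s + t) =
   (\sum_(i <- F) f i - s) + (\sum_(i <- F) g i - t) by ring.
apply: le_lt_trans (ncD _ _) _; lra.
Qed.

Lemma has_sum_scale c f s : has_sum E f s -> has_sum E (fun e => c * f e) (c * s).
Proof.
move=> /hsP h; apply/hsP => eps e0.
have c0 : 0 < nc c + 1 by have := nc_ge0 c; lra.
have e2 : 0 < eps / (nc c + 1) by rewrite divr_gt0.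
have [F1 [s1E k1]] := h _ e2.
exists F1; split => // F hF hsub.
rewrite -mulr_sumr -mulrBr ncM.
have a1 := k1 _ hF hsub.
have : nc c * nc (\sum_(i <- F) f i - s) <= nc c * (eps / (nc c + 1)).
  by rewrite ler_wpM2l ?nc_ge0 // ltW.
move=> /le_lt_trans; apply.
by rewrite mulrA ltr_pdivrMr // mulrDr mulr1 mulrC ltrDl.
Qed.

Lemma has_sum_ext f g s : (forall e, E e -> f e = g e) -> has_sum E f s -> has_sum E g s.
Proof.
move=> fg /hsP h; apply/hsP => eps /h [F0 [h1 h2]]; exists F0; split=> // F hF hsub.
have -> : \sum_(e <- F) g e = \sum_(e <- F) f e.
  by apply: eq_big_seq => x xF; rewrite fg //; exact: hF.
exact: h2.
Qed.

Lemma has_sum_opp f s : has_sum E f s -> has_sum E (fun e => - f e) (- s).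
Proof.
move=> h; have := has_sum_scale (-1) h; rewrite mulN1r; apply: has_sum_ext => e _.
by rewrite mulN1r.
Qed.

Lemma has_sum_sub f g s t : has_sum E f s -> has_sum E g t ->
  has_sum E (fun e => f e - g e) (s - t).
Proof. by move=> h1 h2; apply: has_sum_add h1 (has_sum_opp h2). Qed.

Lemma sum_mono (g : H -> R) (F0 F : {fset H}) : (forall e, E e -> 0 <= g e) ->
  [set` F] `<=` E -> (F0 `<=` F)%fset -> \sum_(e <- F0) g e <= \sum_(e <- F) g e.
Proof.
move=> g0 hF hsub.
rewrite (eq_big_seq (fun x => if x \in F0 then g x else 0)); last by move=> x ->.
rewrite (big_fset_incl _ hsub); last by move=> x _ /negbTE ->.
rewrite big_seq [X in _ <= X]big_seq; apply: ler_sum => x xF.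
by case: ifP => _ //; apply: g0; apply: hF.
Qed.

Lemma has_sum_pos (g : H -> R) (K : R) : (forall e, E e -> 0 <= g e) ->
  (forall F : {fset H}, [set` F] `<=` E -> \sum_(e <- F) g e <= K) ->
  exists s : R, has_sum E (fun e => (g e)%:C) s%:C.
Proof.
move=> g0 hK.
pose S := [set x : R | exists F : {fset H}, [set` F] `<=` E /\ x = \sum_(e <- F) g e].
have hS : has_sup S.
  split; first by exists 0; exists fset0; split; [move=> x /=; rewrite in_fset0 | rewrite big_nil].
  by exists K => x [F [hF ->]]; apply: hK.
exists (sup S); apply/hsP => eps e0.
have [x [F0 [hF0 ->]] hx] := sup_adherent e0 hS.
exists F0; split => // F hF hsub.
rewrite -C_sum -RCB ncC.
have h1 := sum_mono g0 hF hsub.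
have h2 : \sum_(e <- F) g e <= sup S by apply: sup_upper_bound => //; exists F.
rewrite ler0_norm ?subr_le0 //; lra.
Qed.

Lemma has_sum_ge (g : H -> R) s : (forall e, E e -> 0 <= g e) ->
  has_sum E (fun e => (g e)%:C) s ->
  forall F : {fset H}, [set` F] `<=` E -> \sum_(e <- F) g e <= complex.Re s.
Proof.
move=> g0 /hsP h F hF; apply/ler_addgt0Pr => eps /h [F0 [h1 h2]].
have hU := fsetU_sub hF h1.
set U := (F `|` F0)%fset in hU *.
have b := h2 _ hU (fsubsetUr _ _).
have a := sum_mono g0 hU (fsubsetUl F F0).
rewrite -/U -C_sum in b a.
move: a b; set x := \sum_(i <- U) g i => a b.
have c := Re_le_nc (x%:C - s).
rewrite ReB /= in c.
have := ler_norm (x - complex.Re s). lra.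
Qed.

Lemma has_sum_le (g : H -> R) s K :
  has_sum E (fun e => (g e)%:C) s ->
  (forall F : {fset H}, [set` F] `<=` E -> \sum_(e <- F) g e <= K) ->
  complex.Re s <= K.
Proof.
move=> /hsP h hK; apply/ler_addgt0Pr => eps /h [F0 [h1 h2]].
have := h2 _ h1 (fsubset_refl _).
have := hK _ h1. rewrite -C_sum.
set u := \sum_(i <- _) g i => a b.
have := Re_le_nc (u%:C - s); rewrite ReB /= => c.
have := ler_norm (- (u - complex.Re s)); rewrite normrN. lra.
Qed.

Lemma has_sum_real (g : H -> R) s :
  has_sum E (fun e => (g e)%:C) s -> s = (complex.Re s)%:C.
Proof.
move=> /hsP h.
suff : complex.Im s = 0 by case: s h => a b /= _ ->.
apply/eqP; rewrite -normr_le0; apply/ler_addgt0Pr => eps /h [F0 [h1 h2]].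
have := h2 _ h1 (fsubset_refl _); rewrite -C_sum.
set u := \sum_(i <- _) g i => a.
have := Im_le_nc (u%:C - s); rewrite ImD ImN /= add0r normrN. lra.
Qed.

End C.

Section D.
Variables (R : realType) (H : lmodType R[i]) (ip : H -> H -> R[i]).
Hypothesis hH : is_hilbert ip.

Lemma nc_ip a b : nc (ip a b) <= hnorm ip a * hnorm ip b.
Proof.
rewrite /nc /hnorm -sqrtrM ?n2_ge0 // ler_wsqrtr //; exact: CS.
Qed.

Lemma hnorm_ge0 a : 0 <= hnorm ip a. Proof. exact: sqrtr_ge0. Qed.

Lemma hnormD a b : hnorm ip (a + b) <= hnorm ip a + hnorm ip b.
Proof.
rewrite -(ler_pXn2r (n := 2)) ?nnegrE ?addr_ge0 ?hnorm_ge0 //.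
rewrite (hnorm2 hH) (n2D hH) sqrrD !(hnorm2 hH).
have h1 := nc_ip a b; have h2 := Re_le_nc (ip a b); have h3 := ler_norm (complex.Re (ip a b)).
have h4 : 0 <= hnorm ip a * hnorm ip b by rewrite mulr_ge0 ?hnorm_ge0.
lra.
Qed.

Lemma hnormN a : hnorm ip (- a) = hnorm ip a.
Proof. by rewrite /hnorm -/(n2 ip _) (n2N hH). Qed.

Lemma hnorm_lt_sq a (d : R) : 0 < d -> n2 ip a < d ^+ 2 -> hnorm ip a < d.
Proof.
move=> d0 h; rewrite -(ltr_pXn2r (n := 2)) ?nnegrE ?hnorm_ge0 ?ltW //.
by rewrite (hnorm2 hH).
Qed.

Variables (E : set H) (hE : orthonormal_basis ip E).

Lemma onE e : E e -> ip e e = 1. Proof. by case: hE => h _; apply: h. Qed.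
Lemma onO e f : E e -> E f -> e <> f -> ip e f = 0.
Proof. by case: hE => _ [h _]; apply: h. Qed.
Lemma onM x : (forall e, E e -> ip x e = 0) -> x = 0.
Proof. by case: hE => _ [_ h]; apply: h. Qed.

Lemma ip_comb (s : seq H) (c : H -> R[i]) f : uniq s -> (forall e, e \in s -> E e) -> E f ->
  ip (\sum_(e <- s) c e *: e) f = if f \in s then c f else 0.
Proof.
move=> us sE Ef; rewrite (ip_suml hH); under eq_bigr do rewrite (ipZl hH).
case: ifP => fs.
  rewrite (bigD1_seq f) //= onE // mulr1 big1_seq ?addr0 // => e /andP[nef es].
  by rewrite onO ?mulr0 //; [exact: sE | apply/eqP; exact: nef].
rewrite big1_seq // => e /andP[_ es]; rewrite onO ?mulr0 //; first exact: sE.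
by move=> ef; rewrite -ef es in fs.
Qed.

Lemma ip_comb2 (s t : seq H) (c d : H -> R[i]) : uniq s -> (forall e, e \in s -> E e) ->
  (forall e, e \in t -> E e) -> {subset t <= s} ->
  ip (\sum_(e <- s) c e *: e) (\sum_(f <- t) d f *: f) = \sum_(f <- t) conjc (d f) * c f.
Proof.
move=> us sE tE ts; rewrite (ip_sumr hH); apply: eq_big_seq => f ft.
by rewrite (ipZr hH) ip_comb //; [rewrite (ts _ ft) | exact: tE].
Qed.

Lemma n2_comb (s : seq H) (c : H -> R[i]) : uniq s -> (forall e, e \in s -> E e) ->
  n2 ip (\sum_(e <- s) c e *: e) = \sum_(e <- s) abs2 (c e).
Proof.
move=> us sE; rewrite /n2 ip_comb2 // Re_sum; apply: eq_bigr => e _.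
by rewrite mulrC mulJ.
Qed.

Lemma bessel_id x (s : seq H) : uniq s -> (forall e, e \in s -> E e) ->
  n2 ip (x - \sum_(e <- s) ip x e *: e) = n2 ip x - \sum_(e <- s) abs2 (ip x e).
Proof.
move=> us sE; rewrite (n2B hH) n2_comb // (ip_sumr hH) Re_sum.
have -> : \sum_(i <- s) complex.Re (ip x (ip x i *: i)) = \sum_(e <- s) abs2 (ip x e).
  by apply: eq_bigr => e _; rewrite (ipZr hH) mulrC mulJ.
lra.
Qed.

Lemma bessel x (s : seq H) : uniq s -> (forall e, e \in s -> E e) ->
  \sum_(e <- s) abs2 (ip x e) <= n2 ip x.
Proof.
move=> us sE; have := n2_ge0 hH (x - \sum_(e <- s) ip x e *: e).
rewrite bessel_id //; lra.
Qed.

End D.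

Section Lin.
Variables (R : realType) (H : lmodType R[i]) (ip : H -> H -> R[i]).
Variable T : H -> H.
Hypothesis hT : forall (a : R[i]) (x y : H), T (a *: x + y) = a *: T x + T y.
Lemma T0 : T 0 = 0.
Proof. have := hT 1 0 0; rewrite !scale1r addr0 => h; apply/(addrI (T 0)); by rewrite -h addr0. Qed.
Lemma TZ a x : T (a *: x) = a *: T x.
Proof. by have := hT a x 0; rewrite !addr0 T0 addr0. Qed.
Lemma TD x y : T (x + y) = T x + T y.
Proof. by have := hT 1 x y; rewrite !scale1r. Qed.
Lemma TN x : T (- x) = - T x.
Proof. by rewrite -scaleN1r TZ scaleN1r. Qed.
Lemma TB x y : T (x - y) = T x - T y.
Proof. by rewrite TD TN. Qed.
Lemma T_sum (I : Type) (s : seq I) (f : I -> H) : T (\sum_(i <- s) f i) = \sum_(i <- s) T (f i).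
Proof. elim: s => [|a s IH]; first by rewrite !big_nil T0. by rewrite !big_cons TD IH. Qed.
End Lin.


Fixpoint accum (K : choiceType) (G : nat -> {fset K}) (n : nat) : {fset K} :=
  match n with 0 => G 0%N | n'.+1 => (accum G n' `|` G n)%fset end.

Lemma accum_G (K : choiceType) (G : nat -> {fset K}) n : (G n `<=` accum G n)%fset.
Proof. by case: n => [|n] /=; [exact: fsubset_refl | exact: fsubsetUr]. Qed.

Lemma accum_mono (K : choiceType) (G : nat -> {fset K}) n m : (n <= m)%N ->
  (accum G n `<=` accum G m)%fset.
Proof.
move=> nm; rewrite -(subnKC nm); elim: (m - n)%N => [|k IH]; first by rewrite addn0 fsubset_refl.
by rewrite addnS /=; apply: fsubset_trans IH (fsubsetUl _ _).
Qed.

Lemma archi_inv (R : realType) (d : R) : 0 < d -> exists N : nat, forall n, (N <= n)%N -> (n.+1%:R)^-1 < d.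
Proof.
move=> d0; exists (Num.Def.archi_bound (d^-1)) => n Nn.
have dp : 0 <= d^-1 by rewrite invr_ge0 ltW.
have h := archi_boundP dp.
rewrite -(invrK d) ltf_pV2 ?posrE ?invr_gt0 ?ltr0n //.
apply: lt_le_trans h _; rewrite ler_nat; exact: leqW.
Qed.

Section RF.
Variables (R : realType) (H : lmodType R[i]) (ip : H -> H -> R[i]).
Hypothesis hH : is_hilbert ip.
Variables (E : set H) (hE : orthonormal_basis ip E).

Lemma ReJM (z : R[i]) : complex.Re (conjc z * z) = abs2 z.
Proof. by rewrite mulrC mulJ. Qed.

Lemma hnorm_on e : E e -> hnorm ip e = 1.
Proof. by move=> Ee; rewrite /hnorm (onE hE Ee) /= sqrtr1. Qed.

Lemma accum_E (G : nat -> {fset H}) : (forall n, [set` G n] `<=` E) -> forall n, [set` accum G n] `<=` E.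
Proof.
move=> hG; elim=> [|n IH] /=; first exact: hG.
exact: fsetU_sub.
Qed.

Lemma RF (c : H -> R[i]) (K : R) :
  (forall F : {fset H}, [set` F] `<=` E -> \sum_(e <- F) abs2 (c e) <= K) ->
  exists y, (forall e, E e -> ip y e = c e) /\ n2 ip y <= K.
Proof.
move=> hK.
have g0 : forall e, E e -> 0 <= abs2 (c e) by move=> e _; exact: abs2_ge0.
pose S := [set x : R | exists F : {fset H}, [set` F] `<=` E /\ x = \sum_(e <- F) abs2 (c e)].
have hS : has_sup S.
  split; first by exists 0; exists fset0; split; [move=> x /=; rewrite in_fset0 | rewrite big_nil].
  by exists K => x [F [hF ->]]; apply: hK.
set s := sup S.
have sub (F : {fset H}) : [set` F] `<=` E -> \sum_(e <- F) abs2 (c e) <= s.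
  by move=> hF; apply: sup_upper_bound => //; exists F.
have K0 : 0 <= K.
  by have := hK fset0; rewrite big_nil; apply; move=> x; rewrite /= in_fset0.
have hG : forall n : nat, exists F : {fset H}, [set` F] `<=` E /\ s - (n.+1%:R)^-1 < \sum_(e <- F) abs2 (c e).
  move=> n; have e0 : 0 < (n.+1%:R)^-1 :> R by rewrite invr_gt0 ltr0n.
  have [z [F [hF hz]] hx] := sup_adherent e0 hS.
  by exists F; rewrite -hz.
case: (choice hG) => G hGp.
pose A := accum G.
have AE : forall n, [set` A n] `<=` E by apply: accum_E => n; case: (hGp n).
have Alow n : s - (n.+1%:R)^-1 < \sum_(e <- A n) abs2 (c e).
  case: (hGp n) => hF h; apply: lt_le_trans h _; apply: sum_mono g0 (AE n) (accum_G _ _).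
pose u n := \sum_(e <- A n) c e *: e.
have AEs n : forall e, e \in A n -> E e by move=> e he; apply: (AE n).
have diff n m : (n <= m)%N -> n2 ip (u m - u n) = \sum_(e <- A m) abs2 (c e) - \sum_(e <- A n) abs2 (c e).
  move=> nm; rewrite (n2B hH) /u !(n2_comb hH hE) ?fset_uniq //; try exact: AEs.
  rewrite (ip_comb2 hH hE) ?fset_uniq //; try exact: AEs; last by move=> e; apply: (fsubsetP (accum_mono G nm)).
  rewrite Re_sum [X in _ * X](eq_bigr (fun e => abs2 (c e))); last by move=> i _; apply: ReJM.
  lra.
have small n m : (n <= m)%N -> n2 ip (u m - u n) <= (n.+1%:R)^-1.
  move=> nm; rewrite diff //; have := sub _ (AE m); have := Alow n.
  set a := \sum_(e <- A m) abs2 (c e); set b := \sum_(e <- A n) abs2 (c e).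
  set d := n.+1%:R^-1; lra.
have cauchy : forall eps : R, 0 < eps -> exists N : nat, forall m n : nat,
    (N <= m)%N -> (N <= n)%N -> hnorm ip (u m - u n) < eps.
  move=> eps e0; have [N hN] := archi_inv (mulr_gt0 e0 e0).
  exists N => m n Nm Nn.
  have key : forall a b, (N <= a)%N -> (a <= b)%N -> hnorm ip (u b - u a) < eps.
    move=> a b Na ab; apply: (hnorm_lt_sq hH) => //.
    apply: le_lt_trans (small _ _ ab) _; rewrite expr2; exact: hN.
  case: (leqP n m) => nm; first exact: key.
  by rewrite -opprB (hnormN hH); apply: key => //; apply: ltnW.
have [y hy] := ip_complete hH cauchy.
exists y; split.
  move=> e Ee.
  have key : exists N, forall n, (N <= n)%N -> ip (u n) e = c e.
    case: (pselect (exists N, e \in A N)) => [[N eN]|nin].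
      exists N => n Nn; rewrite /u (ip_comb hH hE) ?fset_uniq //; try exact: AEs.
      by rewrite (fsubsetP (accum_mono G Nn) e eN).
    have nin' (k : nat) : e \notin A k by apply/negP => h; apply: nin; exists k.
    have ce : c e = 0.
      apply: abs2_eq0; apply/eqP; rewrite eq_le abs2_ge0 andbT.
      apply/ler_addgt0Pr => d d0; rewrite add0r.
      have [N hN] := archi_inv d0.
      have hU : [set` (e |` A N)%fset] `<=` E.
        by move=> x /=; rewrite !inE => /orP[/eqP ->|/(AE N)].
      have := sub _ hU; rewrite big_fsetU1 //=.
      have := Alow N; have := hN N (leqnn N).
      set a := \sum_(i <- A N) abs2 (c i); set dd := N.+1%:R^-1; lra.
    exists 0%N => n _; rewrite /u (ip_comb hH hE) ?fset_uniq //; try exact: AEs.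
    by rewrite (negbTE (nin' n)) ce.
  have [N hN] := key.
  apply/eqP; rewrite -subr_eq0; apply/eqP/small_eq0 => eps e0.
  have [N' hN'] := hy _ e0.
  have hn : (N <= maxn N N')%N by rewrite leq_maxl.
  have hn' : (N' <= maxn N N')%N by rewrite leq_maxr.
  rewrite -(hN _ hn) -ncN opprB -(ipBl hH).
  apply: le_trans (nc_ip hH _ _) _; rewrite (hnorm_on Ee) mulr1.
  exact: ltW (hN' _ hn').
have hK' : hnorm ip y <= Num.sqrt K.
  apply/ler_addgt0Pr => eps /hy [N hN].
  have h1 := hN N (leqnn N).
  have h2 : hnorm ip (u N) <= Num.sqrt K.
    apply: ler_wsqrtr; rewrite -/(n2 ip _) /u (n2_comb hH hE) ?fset_uniq //; try exact: AEs; exact: hK.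
  have -> : y = u N + (y - u N) by rewrite addrC subrK.
  apply: le_trans (hnormD hH _ _) _.
  rewrite -opprB (hnormN hH). lra.
rewrite -(hnorm2 hH) -(sqr_sqrtr K0) ler_pXn2r ?nnegrE ?hnorm_ge0 ?sqrtr_ge0 //.
Qed.

End RF.


Lemma sum_const_seq (R : realType) (T : Type) (s : seq T) (d : R) :
  \sum_(i <- s) d = d *+ size s.
Proof. elim: s => [|a s IH]; first by rewrite big_nil. by rewrite big_cons IH mulrS. Qed.

Section F.
Variables (R : realType) (H : lmodType R[i]) (ip : H -> H -> R[i]).
Hypothesis hH : is_hilbert ip.

Lemma ip_ext a b : (forall z, ip z a = ip z b) -> a = b.
Proof.
move=> h; apply/eqP; rewrite -subr_eq0; apply/eqP; apply: (ip_def hH).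
by rewrite (ipBr hH) h subrr.
Qed.

Lemma adjE (T T' : H -> H) : (forall x y, ip (T x) y = ip x (T' y)) ->
  forall y, adj ip T y = T' y.
Proof.
move=> h y; apply: xget_unique; first by move=> z; apply: h.
move=> w hw; apply: ip_ext => z; by rewrite -hw h.
Qed.

Variables (E : set H) (hE : orthonormal_basis ip E).

Lemma fsE (F : {fset H}) : [set` F] `<=` E -> forall e, e \in F -> E e.
Proof. by move=> h e he; apply: h. Qed.

Lemma parseval_sup x eps : 0 < eps -> exists F : {fset H},
  [set` F] `<=` E /\ n2 ip x - eps < \sum_(e <- F) abs2 (ip x e).
Proof.
move=> e0; case: (pselect (exists F : {fset H},
  [set` F] `<=` E /\ n2 ip x - eps < \sum_(e <- F) abs2 (ip x e))) => // hno.
have hK : forall F : {fset H}, [set` F] `<=` E -> \sum_(e <- F) abs2 (ip x e) <= n2 ip x - eps.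
  move=> F hF; rewrite leNgt; apply/negP => h; apply: hno; exists F; split => //.
have [y [hy ny]] := RF hH hE hK.
have xy : x = y.
  apply/eqP; rewrite -subr_eq0; apply/eqP; apply: (onM hE) => e Ee.
  by rewrite (ipBl hH) hy // subrr.
by move: ny; rewrite xy; lra.
Qed.

Lemma parseval_net x eps : 0 < eps -> exists F : {fset H},
  [set` F] `<=` E /\ n2 ip (x - \sum_(e <- F) ip x e *: e) < eps.
Proof.
move=> /(parseval_sup x) [F [hF h]]; exists F; split => //.
rewrite (bessel_id hH hE) ?fset_uniq //; try exact: fsE.
lra.
Qed.

Lemma parseval_multi (s : seq H) eps : 0 < eps -> exists F : {fset H},
  [set` F] `<=` E /\ forall x, x \in s -> n2 ip x - eps < \sum_(e <- F) abs2 (ip x e).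
Proof.
move=> e0; elim: s => [|x s [F [hF IH]]].
  by exists fset0; split => // y; rewrite /= in_fset0.
have [G [hG hx]] := parseval_sup x e0.
exists (F `|` G)%fset; split; first exact: fsetU_sub.
have g0 (z : H) : forall e, E e -> 0 <= abs2 (ip z e) by move=> e _; exact: abs2_ge0.
move=> y; rewrite inE => /orP[/eqP ->|ys].
  apply: lt_le_trans hx _; apply: sum_mono (g0 x) (fsetU_sub hF hG) (fsubsetUr _ _).
apply: lt_le_trans (IH y ys) _; apply: sum_mono (g0 y) (fsetU_sub hF hG) (fsubsetUl _ _).
Qed.

Lemma riesz (phi : H -> R[i]) (M : R) :
  (forall a x y, phi (a *: x + y) = a * phi x + phi y) ->
  (forall x, nc (phi x) <= M * hnorm ip x) -> exists w, forall z, phi z = ip z w.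
Proof.
move=> hl hb.
have phi0 : phi 0 = 0.
  have := hl 1 0 0; rewrite scale1r addr0 mul1r => h.
  by apply/(addrI (phi 0)); rewrite -h addr0.
have phiB x y : phi (x - y) = phi x - phi y.
  have := hl (-1) y x; rewrite scaleN1r mulN1r addrC => ->; by rewrite addrC.
have phi_sum (s : seq H) (c : H -> R[i]) : phi (\sum_(e <- s) c e *: e) = \sum_(e <- s) c e * phi e.
  elim: s => [|a s IH]; first by rewrite !big_nil phi0.
  by rewrite !big_cons hl IH.
have hK : forall F : {fset H}, [set` F] `<=` E -> \sum_(e <- F) abs2 (conjc (phi e)) <= M ^+ 2.
  move=> F hF.
  under eq_bigr do rewrite abs2J.
  set S := \sum_(e <- F) abs2 (phi e).
  have S0 : 0 <= S by apply: sumr_ge0 => e _; exact: abs2_ge0.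
  pose g := \sum_(e <- F) conjc (phi e) *: e.
  have pg : phi g = S%:C.
    rewrite /g phi_sum /S C_sum; apply: eq_bigr => e _; by rewrite mulrC mulJ.
  have ng : n2 ip g = S.
    rewrite /g (n2_comb hH hE) ?fset_uniq //; try exact: fsE.
    by apply: eq_bigr => e _; rewrite abs2J.
  have h : S <= M * hnorm ip g by have := hb g; rewrite pg ncC ger0_norm.
  rewrite /hnorm -/(n2 ip g) ng in h.
  have rS := sqr_sqrtr S0; have r0 := sqrtr_ge0 S.
  move: h rS r0; set r := Num.sqrt S => h rS r0; rewrite -rS; rewrite -rS in h.
  nra.
have [w [hw _]] := RF hH hE hK.
exists w => z.
have ew e : E e -> ip e w = phi e by move=> Ee; rewrite ipC ?hw // JK.
apply/eqP; rewrite -subr_eq0; apply/eqP/small_eq0 => eps e0.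
set Q := `|M| + hnorm ip w.
have Q0 : 0 <= Q by rewrite addr_ge0 ?normr_ge0 ?hnorm_ge0.
have Q1 : 0 < Q + 1 by lra.
have d0 : 0 < eps / (Q + 1) by rewrite divr_gt0.
have [F [hF hd]] := parseval_net z (mulr_gt0 d0 d0).
set zF := \sum_(e <- F) ip z e *: e in hd.
have eq1 : phi zF = ip zF w.
  rewrite /zF phi_sum (ip_suml hH); apply: eq_big_seq => e eF.
  by rewrite (ipZl hH) ew //; apply: hF.
have -> : phi z - ip z w = phi (z - zF) - ip (z - zF) w.
  by rewrite phiB (ipBl hH) eq1; ring.
set d := z - zF in hd *.
have hdn : hnorm ip d < eps / (Q + 1) by apply: (hnorm_lt_sq hH) => //; rewrite expr2.
apply: le_trans (ncB _ _) _.
have h1 := hb d; have h2 := nc_ip hH d w.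
have h3 : M * hnorm ip d <= `|M| * hnorm ip d by rewrite ler_wpM2r ?hnorm_ge0 ?ler_norm.
have h4 : Q * hnorm ip d <= Q * (eps / (Q + 1)) by rewrite ler_wpM2l // ltW.
have h5 : Q * (eps / (Q + 1)) <= eps.
  by rewrite mulrA ler_pdivrMr // mulrDr mulr1 mulrC lerDl ltW.
have : hnorm ip d * hnorm ip w + `|M| * hnorm ip d = Q * hnorm ip d by rewrite /Q; ring.
lra.
Qed.

Lemma adj_exists (T : H -> H) : bounded_linear ip T ->
  exists T' : H -> H, forall x y, ip (T x) y = ip x (T' y).
Proof.
move=> [hl [M hM]].
have h : forall y, exists w, forall z, ip (T z) y = ip z w.
  move=> y; apply: (riesz (M := M * hnorm ip y)).
    by move=> a x z; rewrite hl (ipDl hH) (ipZl hH).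
  move=> x; apply: le_trans (nc_ip hH _ _) _.
  rewrite mulrAC ler_wpM2r ?hnorm_ge0 //.
case: (choice h) => T' hT'; by exists T'.
Qed.

End F.


Section G.
Variables (R : realType) (H : lmodType R[i]) (ip : H -> H -> R[i]).
Hypothesis hH : is_hilbert ip.

Definition adjp (Z Z' : H -> H) := forall x y, ip (Z x) y = ip x (Z' y).
Definition hsb (E : set H) (Z : H -> H) := exists K : R,
  forall F : {fset H}, [set` F] `<=` E -> \sum_(e <- F) n2 ip (Z e) <= K.

Lemma adjp_sym Z Z' : adjp Z Z' -> adjp Z' Z.
Proof. by move=> h x y; rewrite (ipC hH) -h -(ipC hH). Qed.

Lemma transfer (E1 E2 : set H) (h1 : orthonormal_basis ip E1) (h2 : orthonormal_basis ip E2)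
  (S T : H -> H) (K : R) : adjp S T ->
  (forall F : {fset H}, [set` F] `<=` E1 -> \sum_(e <- F) n2 ip (S e) <= K) ->
  forall F : {fset H}, [set` F] `<=` E2 -> \sum_(e <- F) n2 ip (T e) <= K.
Proof.
move=> hST hK F hF; apply/ler_addgt0Pr => eps e0.
have k0 : 0 < (size F)%:R + 1 :> R by rewrite ltr_wpDl ?ler0n.
set k := (size F)%:R + 1 in k0.
have d0 : 0 < eps / k by rewrite divr_gt0.
have [G [hG hGp]] := parseval_multi hH h1 (map T F) d0.
have step1 : \sum_(f <- F) n2 ip (T f) <=
    \sum_(f <- F) (\sum_(g <- G) abs2 (ip (T f) g) + eps / k).
  rewrite big_seq [X in _ <= X]big_seq; apply: ler_sum => f fF.
  have := hGp (T f) (map_f T fF).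
  set a := \sum_(e <- G) abs2 (ip (T f) e); set b := eps / k; lra.
rewrite big_split /= sum_const_seq in step1.
have step2 : \sum_(f <- F) \sum_(g <- G) abs2 (ip (T f) g) =
    \sum_(g <- G) \sum_(f <- F) abs2 (ip (S g) f).
  rewrite exchange_big; apply: eq_bigr => g _; apply: eq_bigr => f _.
  by rewrite (ipC hH) -hST abs2J.
have step3 : \sum_(g <- G) \sum_(f <- F) abs2 (ip (S g) f) <= \sum_(g <- G) n2 ip (S g).
  apply: ler_sum => g _; apply: (bessel hH h2); [exact: fset_uniq | exact: fsE].
have step4 := hK G hG.
have step5 : eps / k *+ size F <= eps.
  rewrite -mulr_natr mulrAC ler_pdivrMr // ler_wpM2l ?ltW //.
  rewrite /k; lra.
move: step1 step3 step4 step5; rewrite step2.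
set a := \sum_(f <- F) n2 ip (T f).
set b := \sum_(g <- G) \sum_(f <- F) abs2 (ip (S g) f).
set c := \sum_(g <- G) n2 ip (S g).
set d := eps / k *+ size F.
lra.
Qed.

Lemma hsb_of_esum (E' : set H) (T : H -> H) :
  (\esum_(e in E') ((hnorm ip (T e)) ^+ 2)%:E < +oo)%E ->
  exists K : R, forall F : {fset H}, [set` F] `<=` E' -> \sum_(e <- F) n2 ip (T e) <= K.
Proof.
set S := (\esum_(e in E') _)%E => hS.
have S0 : (0 <= S)%E by apply: esum_ge0 => x _; rewrite lee_fin sqr_ge0.
have Sfin : S \is a fin_num by rewrite ge0_fin_numE.
exists (fine S) => F hF.
rewrite -lee_fin fineK //.
have -> : \sum_(e <- F) n2 ip (T e) = \sum_(e <- F) hnorm ip (T e) ^+ 2.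
  by apply: eq_bigr => e _; rewrite (hnorm2 hH).
apply: esum_ge; exists [set` F]; first by split => //; exact: finite_fset.
by rewrite fsumEFin ?finite_fset // -fsbig_seq ?fset_uniq.
Qed.

Variables (E : set H) (hE : orthonormal_basis ip E).

Lemma hsb_of_HS (T T' : H -> H) : hilbert_schmidt ip T -> adjp T T' -> hsb E T /\ hsb E T'.
Proof.
move=> [_ [E' [hE' hS]]] hT.
have [K hK] := hsb_of_esum hS.
have hK' := transfer hE' hE' hT hK.
split; exists K.
  have := transfer hE' hE (adjp_sym hT) hK'. exact.
have := transfer hE' hE hT hK. exact.
Qed.

Lemma hsb_comb (Z1 Z2 : H -> H) (a b : R[i]) : hsb E Z1 -> hsb E Z2 ->
  hsb E (fun e => a *: Z1 e + b *: Z2 e).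
Proof.
move=> [K1 h1] [K2 h2]; exists (2 * abs2 a * K1 + 2 * abs2 b * K2) => F hF.
apply: le_trans (_ : \sum_(e <- F) (2 * abs2 a * n2 ip (Z1 e) + 2 * abs2 b * n2 ip (Z2 e)) <= _).
  apply: ler_sum => e _; apply: le_trans (n2D_le hH _ _) _.
  by rewrite !(n2Z hH) !mulrA.
rewrite big_split /= -!mulr_sumr.
have a0 : 0 <= 2 * abs2 a by rewrite mulr_ge0 ?abs2_ge0.
have b0 : 0 <= 2 * abs2 b by rewrite mulr_ge0 ?abs2_ge0.
by apply: lerD; apply: ler_wpM2l => //; [exact: h1 | exact: h2].
Qed.

Lemma adjp_comb (Z1 Z1' Z2 Z2' : H -> H) (a b : R[i]) : adjp Z1 Z1' -> adjp Z2 Z2' ->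
  adjp (fun e => a *: Z1 e + b *: Z2 e) (fun e => conjc a *: Z1' e + conjc b *: Z2' e).
Proof.
move=> h1 h2 x y.
by rewrite (ipDl hH) (ipDr hH) !(ipZl hH) !(ipZr hH) !JK h1 h2.
Qed.

Lemma hs_ex (Z : H -> H) : hsb E Z -> exists s, has_sum E (fun e => (n2 ip (Z e))%:C) s.
Proof.
move=> [K hK]; have [s hs] := has_sum_pos (fun e _ => n2_ge0 hH (Z e)) hK.
by exists s%:C.
Qed.

Lemma hs_adj (Z Z' : H -> H) s t : adjp Z Z' ->
  has_sum E (fun e => (n2 ip (Z e))%:C) s -> has_sum E (fun e => (n2 ip (Z' e))%:C) t -> s = t.
Proof.
move=> hZ hs ht.
have g0 (W : H -> H) : forall e, E e -> 0 <= n2 ip (W e) by move=> e _; exact: n2_ge0.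
have a := has_sum_ge (g0 Z) hs; have b := has_sum_ge (g0 Z') ht.
have c := has_sum_le ht (transfer hE hE hZ a).
have d := has_sum_le hs (transfer hE hE (adjp_sym hZ) b).
rewrite (has_sum_real hs) (has_sum_real ht); congr (_%:C); lra.
Qed.

End G.


Section I.
Variables (R : realType) (H : lmodType R[i]) (ip : H -> H -> R[i]).
Hypothesis hH : is_hilbert ip.

Lemma J_sum (I : Type) (s : seq I) (f : I -> R[i]) :
  conjc (\sum_(i <- s) f i) = \sum_(i <- s) conjc (f i).
Proof. elim: s => [|a s IH]; first by rewrite !big_nil J0. by rewrite !big_cons JD IH. Qed.

Lemma ii : 'i * 'i = -1 :> R[i].
Proof. by rewrite -expr2 sqr_i. Qed.
Lemma Ji : conjc 'i = - 'i :> R[i]. Proof. by apply/eqP; rewrite eq_complex /= oppr0 !eqxx. Qed.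
Lemma J1 : conjc 1 = 1 :> R[i]. Proof. by apply/eqP; rewrite eq_complex /= oppr0 !eqxx. Qed.

Lemma expand u v a : ip (u + a *: v) (u + a *: v) =
  ip u u + conjc a * ip u v + a * ip v u + a * conjc a * ip v v.
Proof.
rewrite (ipDl hH) !(ipDr hH) !(ipZl hH) !(ipZr hH); ring.
Qed.

Lemma polar u v : ip u v = 4^-1 * ((n2 ip (u + 1 *: v))%:C - (n2 ip (u + (-1) *: v))%:C
   + 'i * (n2 ip (u + 'i *: v))%:C - 'i * (n2 ip (u + (- 'i) *: v))%:C).
Proof.
rewrite -!(ipxx hH) !expand !JN Ji J1 opprK.
set A := ip u v; set B := ip v u; set p := ip u u; set q := ip v v.
have e : p + 1 * A + 1 * B + 1 * 1 * q - (p + - 1 * A + - 1 * B + - 1 * - 1 * q) +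
  'i * (p + - 'i * A + 'i * B + 'i * - 'i * q) -
  'i * (p + 'i * A + - 'i * B + - 'i * 'i * q) = 4 * A + 2 * ('i * 'i + 1) * (B - A) by ring.
by rewrite e ii addNr mulr0 mul0r addr0 mulrA mulVf ?mul1r.
Qed.

Variables (E : set H) (hE : orthonormal_basis ip E).

Lemma has_sum_conj f s : has_sum E f s -> has_sum E (fun e => conjc (f e)) (conjc s).
Proof.
move=> /(hsP E) h; apply/hsP => eps /h [F0 [h1 h2]]; exists F0; split => // F hF hsub.
by rewrite -J_sum -JN -JD ncJ; apply: h2.
Qed.

Lemma trace_eq (T : H -> H) s : has_sum E (fun e => ip (T e) e) s -> trace ip E T = s.
Proof.
move=> hs; apply: xget_unique => // s' hs'; exact: has_sum_unique hs' hs.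
Qed.

Lemma polar_hs (U V : H -> H) s1 s2 s3 s4 :
  has_sum E (fun e => (n2 ip (U e + 1 *: V e))%:C) s1 ->
  has_sum E (fun e => (n2 ip (U e + (-1) *: V e))%:C) s2 ->
  has_sum E (fun e => (n2 ip (U e + 'i *: V e))%:C) s3 ->
  has_sum E (fun e => (n2 ip (U e + (- 'i) *: V e))%:C) s4 ->
  has_sum E (fun e => ip (U e) (V e)) (4^-1 * (s1 - s2 + 'i * s3 - 'i * s4)).
Proof.
move=> h1 h2 h3 h4.
have := has_sum_scale 4^-1 (has_sum_sub (has_sum_add (has_sum_sub h1 h2) (has_sum_scale 'i h3))
   (has_sum_scale 'i h4)).
by apply: has_sum_ext => e _; rewrite polar.
Qed.

Lemma hsb_ext (Z1 Z2 : H -> H) : (forall e, Z1 e = Z2 e) -> hsb ip E Z1 -> hsb ip E Z2.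
Proof. by move=> h [K hK]; exists K => F hF; under eq_bigr do rewrite -h; exact: hK. Qed.

Lemma hsb_fam (U V : H -> H) a : hsb ip E U -> hsb ip E V ->
  exists s, has_sum E (fun e => (n2 ip (U e + a *: V e))%:C) s.
Proof.
move=> hU hV; have := hsb_comb hH 1 a hU hV.
move=> /(hsb_ext (Z2 := fun e => U e + a *: V e)) h.
by apply: (hs_ex hH); apply: h => e; rewrite scale1r.
Qed.

Lemma hs_ip_ex (U V : H -> H) : hsb ip E U -> hsb ip E V ->
  exists w, has_sum E (fun e => ip (U e) (V e)) w.
Proof.
move=> hU hV.
have [s1 h1] := hsb_fam 1 hU hV; have [s2 h2] := hsb_fam (-1) hU hV.
have [s3 h3] := hsb_fam 'i hU hV; have [s4 h4] := hsb_fam (- 'i) hU hV.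
by eexists; apply: polar_hs h1 h2 h3 h4.
Qed.

Lemma abs2_unit (a : R[i]) : abs2 a = 1 -> a * conjc a = 1.
Proof. by move=> h; rewrite mulJ h. Qed.

Lemma fam_eq (X X' Y Y' : H -> H) a : adjp ip X X' -> adjp ip Y Y' -> abs2 a = 1 ->
  hsb ip E X -> hsb ip E X' -> hsb ip E Y -> hsb ip E Y' ->
  exists s, has_sum E (fun e => (n2 ip (Y e + a *: X' e))%:C) s /\
            has_sum E (fun e => (n2 ip (X e + a *: Y' e))%:C) s.
Proof.
move=> hX hY ha bX bX' bY bY'.
have [s hs] := hsb_fam a bY bX'; have [t ht] := hsb_fam a bX bY'.
exists s; split => //.
have hZ := adjp_comb hH 1 a hY (adjp_sym hH hX).
have hs' : has_sum E (fun e => (n2 ip (1 *: Y e + a *: X' e))%:C) s.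
  by apply: has_sum_ext hs => e _; rewrite scale1r.
have ht' : has_sum E (fun e => (n2 ip (conjc 1 *: Y' e + conjc a *: X e))%:C) t.
  apply: has_sum_ext ht => e _; congr (_%:C).
  rewrite [RHS](_ : _ = abs2 a * n2 ip (conjc 1 *: Y' e + conjc a *: X e)); last by rewrite ha mul1r.
  by rewrite -(n2Z hH) scalerDr !scalerA J1 mulr1 abs2_unit // scale1r addrC.
by rewrite (hs_adj hH hE hZ hs' ht').
Qed.

Lemma trace_comm (X X' Y Y' : H -> H) : adjp ip X X' -> adjp ip Y Y' ->
  hsb ip E X -> hsb ip E X' -> hsb ip E Y -> hsb ip E Y' ->
  exists tau, has_sum E (fun e => ip (X (Y e)) e) tau /\ has_sum E (fun e => ip (Y (X e)) e) tau.
Proof.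
move=> hX hY bX bX' bY bY'.
have a1 : abs2 (1 : R[i]) = 1 by rewrite abs2E /= expr1n expr0n addr0.
have a2 : abs2 (-1 : R[i]) = 1 by rewrite abs2E /= oppr0 sqrrN expr1n expr0n addr0.
have a3 : abs2 ('i : R[i]) = 1 by rewrite abs2E /= expr1n expr0n add0r.
have a4 : abs2 (- 'i : R[i]) = 1 by rewrite abs2E /= oppr0 sqrrN expr1n expr0n add0r.
have [s1 [h1 k1]] := fam_eq hX hY a1 bX bX' bY bY'.
have [s2 [h2 k2]] := fam_eq hX hY a2 bX bX' bY bY'.
have [s3 [h3 k3]] := fam_eq hX hY a3 bX bX' bY bY'.
have [s4 [h4 k4]] := fam_eq hX hY a4 bX bX' bY bY'.
eexists; split.
  have := polar_hs h1 h2 h3 h4; apply: has_sum_ext => e _; by rewrite hX.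
have := polar_hs k1 k2 k3 k4; apply: has_sum_ext => e _; by rewrite hY.
Qed.

End I.


Section Main.
Variables (R : realType) (H : lmodType R[i]) (ip : H -> H -> R[i]).
Hypothesis hH : is_hilbert ip.
Variables (E : set H) (hE : orthonormal_basis ip E).
Variables (B C Bs Cs : H -> H).
Hypotheses (hBl : forall a x y, B (a *: x + y) = a *: B x + B y)
  (hCl : forall a x y, C (a *: x + y) = a *: C x + C y)
  (hBs : adjp ip B Bs) (hCs : adjp ip C Cs)
  (bB : hsb ip E B) (bBs : hsb ip E Bs) (bC : hsb ip E C) (bCs : hsb ip E Cs).

Lemma adjp_ext (Z Z1 Z2 : H -> H) : adjp ip Z Z1 -> (forall y, Z1 y = Z2 y) -> adjp ip Z Z2.
Proof. by move=> h e x y; rewrite h e. Qed.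
Lemma adjp_extl (Z1 Z2 Z' : H -> H) : adjp ip Z1 Z' -> (forall x, Z1 x = Z2 x) -> adjp ip Z2 Z'.
Proof. by move=> h e x y; rewrite -e h. Qed.

Lemma hs_norm_sq (T T' : H -> H) s : adjp ip T T' -> has_sum E (fun e => (n2 ip (T e))%:C) s ->
  hs_norm ip E T ^+ 2 = complex.Re s.
Proof.
move=> hT hs.
have tr : trace ip E (adj ip T \o T) = s.
  apply: trace_eq; apply: has_sum_ext hs => e _.
  by rewrite /= (adjE hH hT) (ipC hH) -hT (ipxx hH) JC.
rewrite /hs_norm tr sqr_sqrtr //.
have := has_sum_ge (fun e _ => n2_ge0 hH (T e)) hs (F := fset0); rewrite big_nil; apply.
by move=> x; rewrite /= in_fset0.
Qed.

Lemma L1 : exists tau, has_sum E (fun e => ip (B (B e)) e) tau /\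
  trace ip E ((B \+ C) \o (B \+ C)) + trace ip E ((B \- C) \o (B \- C))
    + 2 * trace ip E ((B \+ C) \o (B \- C)) = 4 * tau.
Proof.
have [tBB [hBB _]] := trace_comm hH hE hBs hBs bB bBs bB bBs.
have [tBC [hBC hCB]] := trace_comm hH hE hBs hCs bB bBs bC bCs.
have [tCC [hCC _]] := trace_comm hH hE hCs hCs bC bCs bC bCs.
have BD := TD hBl; have BB := TB hBl; have CD := TD hCl; have CB := TB hCl.
exists tBB; split => //.
have e1 : trace ip E ((B \+ C) \o (B \+ C)) = tBB + tBC + tBC + tCC.
  apply: trace_eq.
  have := has_sum_add (has_sum_add (has_sum_add hBB hBC) hCB) hCC.
  apply: has_sum_ext => e _.
  by rewrite /= BD CD !(ipDl hH) !addrA.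
have e2 : trace ip E ((B \- C) \o (B \- C)) = tBB - tBC - tBC + tCC.
  apply: trace_eq.
  have := has_sum_add (has_sum_sub (has_sum_sub hBB hBC) hCB) hCC.
  apply: has_sum_ext => e _.
  rewrite /= BB CB !(ipBl hH); ring.
have e3 : trace ip E ((B \+ C) \o (B \- C)) = tBB - tBC + tBC - tCC.
  apply: trace_eq.
  have := has_sum_sub (has_sum_add (has_sum_sub hBB hBC) hCB) hCC.
  apply: has_sum_ext => e _.
  rewrite /= BB CB (ipDl hH) !(ipBl hH); ring.
rewrite e1 e2 e3; ring.
Qed.

End Main.

Section Aux.
Variable R : realType.
Lemma two_C : (2 : R[i]) = (2 : R)%:C.
Proof. by rewrite RCD. Qed.
Lemma inv2C : (2^-1 : R[i]) = (2^-1 : R)%:C.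
Proof.
have h2 : (2:R)%:C != 0 :> R[i] by rewrite -two_C pnatr_eq0.
rewrite two_C; apply: (mulIf h2).
by rewrite mulVf // -RCM mulVf ?pnatr_eq0.
Qed.
Lemma expi0 : expi (0 : R) = 1.
Proof. by rewrite /expi cos0 sin0. Qed.
Lemma abs2_expi (t : R) : abs2 (expi t) = 1.
Proof. by rewrite abs2E /= cos2Dsin2. Qed.
End Aux.

Section Main2.
Variables (R : realType) (H : lmodType R[i]) (ip : H -> H -> R[i]).
Hypothesis hH : is_hilbert ip.
Variables (E : set H) (hE : orthonormal_basis ip E).
Variables (B C Bs Cs : H -> H).
Hypotheses (hBl : forall a x y, B (a *: x + y) = a *: B x + B y)
  (hCl : forall a x y, C (a *: x + y) = a *: C x + C y)
  (hBs : adjp ip B Bs) (hCs : adjp ip C Cs)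
  (bB : hsb ip E B) (bBs : hsb ip E Bs) (bC : hsb ip E C) (bCs : hsb ip E Cs).

Lemma adjP : adjp ip (B \+ C) (fun y => Bs y + Cs y).
Proof. by move=> x y; rewrite /= (ipDl hH) (ipDr hH) hBs hCs. Qed.
Lemma adjM : adjp ip (B \- C) (fun y => Bs y - Cs y).
Proof. by move=> x y; rewrite /= (ipBl hH) (ipBr hH) hBs hCs. Qed.

Lemma hsbP : hsb ip E (B \+ C).
Proof. by apply: (hsb_ext (Z1 := fun e => 1 *: B e + 1 *: C e)) (hsb_comb hH 1 1 bB bC) => e; rewrite !scale1r. Qed.
Lemma hsbM : hsb ip E (B \- C).
Proof. by apply: (hsb_ext (Z1 := fun e => 1 *: B e + (-1) *: C e)) (hsb_comb hH 1 (-1) bB bC) => e; rewrite scale1r scaleN1r. Qed.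

Lemma L2 sB sC : has_sum E (fun e => (n2 ip (B e))%:C) sB -> has_sum E (fun e => (n2 ip (C e))%:C) sC ->
  hs_norm ip E (B \+ C) ^+ 2 + hs_norm ip E (B \- C) ^+ 2 = 2 * complex.Re sB + 2 * complex.Re sC.
Proof.
move=> hsB hsC.
have [sP hsP] := hs_ex hH hsbP; have [sM hsM] := hs_ex hH hsbM.
rewrite (hs_norm_sq hH adjP hsP) (hs_norm_sq hH adjM hsM).
have h1 := has_sum_add hsP hsM.
have h2 := has_sum_add (has_sum_add hsB hsB) (has_sum_add hsC hsC).
have : sP + sM = sB + sB + (sC + sC).
  apply: has_sum_unique h1 _; apply: has_sum_ext h2 => e _.
  rewrite -!RCD; congr (_%:C); rewrite /= (n2D hH) (n2B hH); lra.
move=> /(congr1 (@complex.Re R)); rewrite !ReD; lra.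
Qed.

Lemma L3 sB sC : has_sum E (fun e => (n2 ip (B e))%:C) sB -> has_sum E (fun e => (n2 ip (C e))%:C) sC ->
  complex.Re (trace ip E ((B \+ C) \o adj ip (B \- C))) = complex.Re sB - complex.Re sC.
Proof.
move=> hsB hsC.
have [sBs hsBs] := hs_ex hH bBs; have [sCs hsCs] := hs_ex hH bCs.
have [W hW] := hs_ip_ex hH bBs bCs.
have eB := hs_adj hH hE hBs hsB hsBs; have eC := hs_adj hH hE hCs hsC hsCs.
have BB := TB hBl; have CB := TB hCl.
have -> : trace ip E ((B \+ C) \o adj ip (B \- C)) = sBs - conjc W + W - sCs.
  apply: trace_eq.
  have := has_sum_sub (has_sum_add (has_sum_sub hsBs (has_sum_conj hW)) hW) hsCs.
  apply: has_sum_ext => e _.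
  rewrite /= (adjE hH adjM) BB CB (ipDl hH) !(ipBl hH) !hBs !hCs -!(ipxx hH).
  rewrite [ip (Cs e) (Bs e)](ipC hH); ring.
rewrite -eB -eC; case: W {hW} => a b; case: sB {hsB eB} => c d; case: sC {hsC eC} => f g /=.
lra.
Qed.

Section Xop.
Variables (t : R) (l1 l2 : R[i]).
Let A := fun x => expi t *: (l1 *: B x + l2 *: C x).
Let As := fun y => conjc (expi t) *: (conjc l1 *: Bs y + conjc l2 *: Cs y).
Let X := fun x => 2^-1 *: (A x + As x).

Lemma adjA : adjp ip A As.
Proof.
move=> x y; rewrite /A /As (ipZl hH) (ipDl hH) !(ipZl hH) hBs hCs.
by rewrite (ipZr hH) (ipDr hH) !(ipZr hH) !JK.
Qed.

Lemma J2 : conjc (2^-1 : R[i]) = 2^-1.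
Proof. by rewrite inv2C JC. Qed.

Lemma adjX : adjp ip X X.
Proof.
move=> x y; rewrite /X (ipZl hH) (ipZr hH) J2 (ipDl hH) (ipDr hH) adjA (adjp_sym hH adjA).
by rewrite addrC.
Qed.

Lemma ReOpX : ReOp ip A = X.
Proof. by apply: funext => x; rewrite /ReOp (adjE hH adjA). Qed.

Lemma hs_X s : has_sum E (fun e => (n2 ip (X e))%:C) s -> hs_norm ip E (ReOp ip A) ^+ 2 = complex.Re s.
Proof. move=> hs; rewrite ReOpX. have := hs_norm_sq hH adjX hs. exact. Qed.

Lemma abs2_inv2 : abs2 (2^-1 : R[i]) = 4^-1.
Proof. by rewrite inv2C abs2E /= expr0n addr0 exprVn; congr (_^-1); rewrite expr2; lra. Qed.

Lemma X_bound (h1 : abs2 l1 <= 1) (h2 : abs2 l2 <= 1) e :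
  n2 ip (X e) <= n2 ip (B e) + n2 ip (C e) + n2 ip (Bs e) + n2 ip (Cs e).
Proof.
rewrite /X (n2Z hH) abs2_inv2.
have k1 := n2D_le hH (A e) (As e).
have k2 : n2 ip (A e) <= 2 * n2 ip (B e) + 2 * n2 ip (C e).
  rewrite /A (n2Z hH) abs2_expi mul1r; apply: le_trans (n2D_le hH _ _) _.
  rewrite !(n2Z hH).
  have := n2_ge0 hH (B e); have := n2_ge0 hH (C e); nra.
have k3 : n2 ip (As e) <= 2 * n2 ip (Bs e) + 2 * n2 ip (Cs e).
  rewrite /As (n2Z hH) abs2J abs2_expi mul1r; apply: le_trans (n2D_le hH _ _) _.
  rewrite !(n2Z hH) !abs2J.
  have := n2_ge0 hH (Bs e); have := n2_ge0 hH (Cs e); nra.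
move: k1 k2 k3; set a := n2 ip (A e + As e); lra.
Qed.

End Xop.

End Main2.


Section Aux2.
Variable R : realType.
Lemma natC n : ((n%:R : R)%:C) = n%:R :> R[i].
Proof. exact: rmorph_nat. Qed.
Lemma inv4C : (4^-1 : R[i]) = (4^-1 : R)%:C.
Proof.
have h2 : (4:R)%:C != 0 :> R[i] by rewrite natC pnatr_eq0.
rewrite -natC; apply: (mulIf h2).
by rewrite mulVf // -RCM mulVf ?pnatr_eq0.
Qed.
Lemma abs2C (r : R) : abs2 r%:C = r ^+ 2.
Proof. by rewrite abs2E /= expr0n addr0. Qed.
Lemma nc0 : nc (0 : R[i]) = 0.
Proof. by rewrite /nc abs2E /= expr0n addr0 sqrtr0. Qed.
Lemma normc2 (l : R[i]) : `|l| ^+ 2 = (abs2 l)%:C.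
Proof. by rewrite normcE' expr2 -RCM -expr2 nc2. Qed.

Lemma lam_ex (tau : R[i]) : exists l : R[i], abs2 l = 1 /\ l * l * tau = (nc tau)%:C.
Proof.
have [->|nz] := eqVneq tau 0.
  exists 1; split; first by rewrite abs2E /= expr1n expr0n addr0.
  by rewrite mulr0 nc0.
set n := nc tau.
have n0 : 0 < n.
  rewrite lt_def nc_ge0 andbT; apply/eqP => h; move/eqP: nz; apply; exact: nc_eq0.
pose l := sqrtc (conjc tau * (n^-1)%:C).
have l2 : l * l = conjc tau * (n^-1)%:C by rewrite -expr2 sqr_sqrtc.
exists l; split.
  have : abs2 l ^+ 2 = 1.
    rewrite expr2 -abs2M l2 abs2M abs2J abs2C -nc2 -/n exprVn mulfV //.
    by rewrite expf_neq0 // gt_eqF.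
  move/eqP; rewrite sqrf_eq1 => /orP[/eqP //|/eqP h].
  by have := abs2_ge0 l; rewrite h; lra.
rewrite l2 mulrAC [conjc tau * tau]mulrC mulJ -RCM -nc2 -/n expr2 -mulrA mulfV ?mulr1 //.
by rewrite gt_eqF.
Qed.
End Aux2.

Section Main3.
Variables (R : realType) (H : lmodType R[i]) (ip : H -> H -> R[i]).
Hypothesis hH : is_hilbert ip.
Variables (E : set H) (hE : orthonormal_basis ip E).
Variables (B C Bs Cs : H -> H).
Hypotheses (hBl : forall a x y, B (a *: x + y) = a *: B x + B y)
  (hCl : forall a x y, C (a *: x + y) = a *: C x + C y)
  (hBs : adjp ip B Bs) (hCs : adjp ip C Cs)
  (bB : hsb ip E B) (bBs : hsb ip E Bs) (bC : hsb ip E C) (bCs : hsb ip E Cs).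

Lemma L4 sB tau : has_sum E (fun e => (n2 ip (B e))%:C) sB ->
  has_sum E (fun e => ip (B (B e)) e) tau ->
  (complex.Re sB + nc tau) / 2 <= w2e ip E B C ^+ 2.
Proof.
move=> hsB htau.
have [l [hl1 hlt]] := lam_ex tau.
set S := [set r : R | exists (l1 l2 : R[i]) (t : R),
         `|l1| ^+ 2 + `|l2| ^+ 2 <= 1 /\
         r = hs_norm ip E (ReOp ip (fun x => expi t *: (l1 *: B x + l2 *: C x)))].
set r0 := hs_norm ip E (ReOp ip (fun x => expi 0 *: (l *: B x + 0 *: C x))).
have mem : S r0.
  exists l, 0, 0; split => //.
  have a0 : abs2 (0:R[i]) = 0 by rewrite abs2E /= expr0n addr0.
  by rewrite !normc2 hl1 a0 -RCD (_ : (1 : R[i]) = 1%:C) // lecR addr0.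
have [KB hKB] := bB; have [KC hKC] := bC; have [KBs hKBs] := bBs; have [KCs hKCs] := bCs.
set Kall := KB + KC + KBs + KCs.
have ub : forall r, S r -> r <= Num.sqrt Kall.
  move=> r [l1 [l2 [t [hc ->]]]].
  have [a1 a2] : abs2 l1 <= 1 /\ abs2 l2 <= 1.
    move: hc; rewrite !normc2 -RCD (_ : (1 : R[i]) = 1%:C) // lecR.
    have := abs2_ge0 l1; have := abs2_ge0 l2; lra.
  set X := (fun x : H => 2^-1 *: ((fun x0 : H => expi t *: (l1 *: B x0 + l2 *: C x0)) x +
         (fun y : H => conjc (expi t) *: (conjc l1 *: Bs y + conjc l2 *: Cs y)) x)).
  have bX : forall F : {fset H}, [set` F] `<=` E -> \sum_(e <- F) n2 ip (X e) <= Kall.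
    move=> F hF.
    apply: le_trans (_ : \sum_(e <- F) (n2 ip (B e) + n2 ip (C e) + n2 ip (Bs e) + n2 ip (Cs e)) <= _).
      apply: ler_sum => e _; exact: (X_bound hH B C Bs Cs t a1 a2 e).
    rewrite !big_split /=.
    have := hKB F hF; have := hKC F hF; have := hKBs F hF; have := hKCs F hF.
    rewrite /Kall; lra.
  have [s hs] := hs_ex hH (ex_intro _ Kall bX : hsb ip E X).
  have h := hs_X hH hBs hCs hs.
  have hle := has_sum_le hs bX.
  have r0' : 0 <= hs_norm ip E (ReOp ip (fun x => expi t *: (l1 *: B x + l2 *: C x))) by exact: sqrtr_ge0.
  rewrite -(ger0_norm r0') -sqrtr_sqr ler_wsqrtr // h //.
have hS : has_sup S by split; [exists r0 | exists (Num.sqrt Kall)].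
have r0w : r0 <= w2e ip E B C by apply: sup_upper_bound.
have r00 : 0 <= r0 by exact: sqrtr_ge0.
have [sBs hsBs] := hs_ex hH bBs.
have eB := hs_adj hH hE hBs hsB hsBs.
have hs0 := has_sum_scale 4^-1 (has_sum_add (has_sum_add (has_sum_add hsB hsBs)
   (has_sum_scale (l * l) htau)) (has_sum_conj (has_sum_scale (l * l) htau))).
have hr0 : r0 ^+ 2 = complex.Re (4^-1 * (sB + sBs + l * l * tau + conjc (l * l * tau))).
  rewrite /r0; apply: (hs_X hH hBs hCs (t:=0) (l1:=l) (l2:=0)); apply: has_sum_ext hs0 => e _.
  rewrite expi0 J1 J0 scale0r addr0 !scale1r scale0r addr0.
  have hu : l * conjc l = 1 by rewrite mulJ hl1.
  have hu' : conjc l * l = 1 by rewrite mulrC.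
  have i4 : (4^-1 : R[i]) = 2^-1 * 2^-1 by rewrite -invfM; congr (_^-1); ring.
  rewrite -[in RHS](ipxx hH) (ipZl hH) (ipZr hH) J2 expand // !(ipZl hH) !(ipZr hH) !JK.
  rewrite -[ip (B e) (Bs e)]hBs [ip (Bs e) (B e)](ipC hH) -[ip (B e) (Bs e)]hBs !(ipxx hH).
  set z := ip (B (B e)) e.
  rewrite i4 !JM.
  transitivity (2^-1 * 2^-1 * ((l * conjc l) * (n2 ip (B e))%:C + (conjc l * l) * (n2 ip (Bs e))%:C
     + l * l * z + conjc l * conjc l * conjc z)).
    by rewrite hu hu'; ring.
  ring.
move: hr0; rewrite hlt JC -eB inv4C ReCM !ReD /= => hr0.
have : r0 ^+ 2 <= w2e ip E B C ^+ 2 by rewrite ler_pXn2r ?nnegrE ?(le_trans r00 r0w).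
rewrite hr0; lra.
Qed.

End Main3.


Theorem corollary3p2 (R : realType) (H : lmodType R[i]) (ip : H -> H -> R[i])
  (hH : is_hilbert ip) (E : set H) (hE : orthonormal_basis ip E)
  (B C : H -> H) (hB : hilbert_schmidt ip B) (hC : hilbert_schmidt ip C) :
  let P := B \+ C in
  let M := B \- C in
  8^-1 * complex.Re `| trace ip E (P \o P) + trace ip E (M \o M)
               + 2 * trace ip E (P \o M) |
  + 8^-1 * (hs_norm ip E P ^+ 2 + hs_norm ip E M ^+ 2)
  + 4^-1 * complex.Re (trace ip E (P \o adj ip M))
  <= w2e ip E B C ^+ 2.
Proof.
cbv zeta.
have [hBl _] := hB.1.
have [hCl _] := hC.1.
have [Bs hBs] := adj_exists hH hE hB.1.
have [Cs hCs] := adj_exists hH hE hC.1.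
have [bB bBs] := hsb_of_HS hH hE hB hBs.
have [bC bCs] := hsb_of_HS hH hE hC hCs.
have [sB hsB] := hs_ex hH bB; have [sC hsC] := hs_ex hH bC.
have [tau [htau e1]] := L1 hH hE hBl hCl hBs hCs bB bBs bC bCs.
rewrite e1 (L2 hH hBs hCs bB bC hsB hsC) (L3 hH hE hBl hCl hBs hCs bBs bCs hsB hsC).
have h4 := L4 hH hE hBs hCs bB bBs bC bCs hsB htau.
have hn : complex.Re `|4 * tau| = 4 * nc tau.
  by rewrite normrM normr_nat normcE' -natC -RCM.
rewrite hn; lra.
Qed.
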